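(* Let $G$ be a group endowed with a bi-invariant metric $\partial$. The following are equivalent: (i) $(G,\partial)$ has the metric Bergman property; (ii) whenever $d$ is a left-invariant pseudo-metric on $G$ such that for some $\varepsilon>0$ the set $\{g\colon\partial(g,1)<\varepsilon\}$ is $d$-bounded, $d$ is bounded on $G$; (iii) whenever $G$ acts by isometries on a metric space $(X,d)$ in such a way that for every $x\in X$ there exists $\varepsilon>0$ with $\partial(g,1)<\varepsilon\Rightarrow d(x,gx)\le1/\varepsilon$, all $G$-orbits are bounded in $(X,d)$.
   Context: For $W\subseteq G$, $(W)_\varepsilon=\{g\colon\partial(g,W)<\varepsilon\}$ and $(W)_\varepsilon^k$ means $\big((W)_\varepsilon\big)^k$. $(G,\partial)$ has the metric Bergman property if whenever $W_0\subseteq W_1\subseteq\cdots$ is an increasing sequence of subsets of $G$ with $\bigcup_nW_n=G$, then for every $\varepsilon>0$ there exist $n$ and $k$ with $(W_n)_\varepsilon^k=G$. *)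

(* Defs.v *)
From Stdlib Require Import Reals List.
Open Scope R_scope.

Section Defs.
Context {G : Type}.
Variables (mul : G -> G -> G) (inv : G -> G) (one : G).

Definition is_group : Prop :=
  (forall x y z, mul x (mul y z) = mul (mul x y) z) /\
  (forall x, mul one x = x) /\ (forall x, mul x one = x) /\
  (forall x, mul (inv x) x = one) /\ (forall x, mul x (inv x) = one).

Fixpoint list_prod (l : list G) : G :=
  match l with nil => one | cons a l' => mul a (list_prod l') end.

Definition set_pow (A : G -> Prop) (k : nat) : G -> Prop :=
  fun g => exists l : list G, length l = k /\ Forall A l /\ list_prod l = g.

End Defs.

Definition is_pseudometric {X : Type} (d : X -> X -> R) : Prop :=
  (forall x, d x x = 0) /\ (forall x y, d x y = d y x) /\
  (forall x y z, d x z <= d x y + d y z).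

Definition is_metric {X : Type} (d : X -> X -> R) : Prop :=
  is_pseudometric d /\ (forall x y, d x y = 0 -> x = y).

(* nonnegativity follows from the axioms above *)

Definition bi_invariant {G : Type} (mul : G -> G -> G) (d : G -> G -> R) : Prop :=
  forall g x y, d (mul g x) (mul g y) = d x y /\ d (mul x g) (mul y g) = d x y.

Definition left_invariant {G : Type} (mul : G -> G -> G) (d : G -> G -> R) : Prop :=
  forall g x y, d (mul g x) (mul g y) = d x y.

(* (W)_eps = { g | dist(g, W) < eps }; dist(g,W) = inf_{w in W} d(g,w) < eps
   iff some w in W has d(g,w) < eps *)
Definition eps_nbhd {G : Type} (d : G -> G -> R) (W : G -> Prop) (eps : R) : G -> Prop :=
  fun g => exists w, W w /\ d g w < eps.

Definition bounded_set {X : Type} (d : X -> X -> R) (S : X -> Prop) : Prop :=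
  exists M : R, forall x y, S x -> S y -> d x y <= M.

Definition metric_Bergman {G : Type} (mul : G -> G -> G) (one : G)
  (d : G -> G -> R) : Prop :=
  forall W : nat -> G -> Prop,
    (forall n g, W n g -> W (S n) g) ->
    (forall g, exists n, W n g) ->
    forall eps : R, 0 < eps ->
      exists n k : nat, forall g, set_pow mul one (eps_nbhd d (W n) eps) k g.

Definition isometric_action {G X : Type} (mul : G -> G -> G) (one : G)
  (act : G -> X -> X) (dX : X -> X -> R) : Prop :=
  (forall x, act one x = x) /\
  (forall g h x, act (mul g h) x = act g (act h x)) /\
  (forall g x y, dX (act g x) (act g y) = dX x y).

(* Main.v *)
From Pilot Require Import Defs.
From Stdlib Require Import Reals List.
From Stdlib Require Import Arith Wf_nat Lra Lia Classical ClassicalEpsilon.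
Open Scope R_scope.
Notation lprod := Pilot.Defs.list_prod.

Lemma grp_inv_inv {G} (mul : G -> G -> G) inv one :
  is_group mul inv one -> forall x, inv (inv x) = x.
Proof.
  intros (A & L & Rr & IL & IR) x.
  rewrite <- (L (inv (inv x))), <- (IR x), <- A, IR, Rr. reflexivity.
Qed.

Lemma grp_inv_mul {G} (mul : G -> G -> G) inv one :
  is_group mul inv one -> forall x y, inv (mul x y) = mul (inv y) (inv x).
Proof.
  intros Hg x y. pose proof Hg as (A & L & Rr & IL & IR).
  assert (H : mul (mul (inv y) (inv x)) (mul x y) = one).
  { rewrite <- A, (A (inv x)), IL, L, IL. reflexivity. }
  rewrite <- (L (inv (mul x y))), <- H, <- A, IR, Rr. reflexivity.
Qed.

Lemma grp_inv_one {G} (mul : G -> G -> G) inv one :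
  is_group mul inv one -> inv one = one.
Proof. intros (A & L & Rr & IL & IR). rewrite <- (Rr (inv one)). apply IL. Qed.

Lemma lp_app {G} (mul : G -> G -> G) inv one :
  is_group mul inv one -> forall l1 l2,
  lprod mul one (l1 ++ l2) = mul (lprod mul one l1) (lprod mul one l2).
Proof.
  intros (A & L & Rr & IL & IR) l1 l2. induction l1 as [|a l IH]; simpl.
  - now rewrite L.
  - now rewrite IH, A.
Qed.

Lemma lp_repeat {G} (mul : G -> G -> G) inv one :
  is_group mul inv one -> forall n, lprod mul one (repeat one n) = one.
Proof.
  intros (A & L & Rr & IL & IR) n. induction n; simpl; auto. now rewrite IHn, L.
Qed.

Lemma lp_inv {G} (mul : G -> G -> G) inv one :
  is_group mul inv one -> forall l,
  lprod mul one (rev (map inv l)) = inv (lprod mul one l).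
Proof.
  intros Hg l. induction l as [|a l IH]; simpl.
  - symmetry. eapply grp_inv_one; eauto.
  - rewrite (lp_app _ _ _ Hg), IH, (grp_inv_mul _ _ _ Hg). simpl.
    destruct Hg as (A & L & Rr & IL & IR). now rewrite Rr.
Qed.

Lemma pm_nonneg {X} (d : X -> X -> R) : is_pseudometric d -> forall x y, 0 <= d x y.
Proof.
  intros (H0 & Hs & Ht) x y. pose proof (Ht x y x). rewrite H0, (Hs y x) in H. lra.
Qed.

Lemma min_exists (P : nat -> Prop) : (exists n, P n) ->
  exists m, P m /\ forall k, P k -> (m <= k)%nat.
Proof.
  intros H. destruct (dec_inh_nat_subset_has_unique_least_element P
    (fun n => classic (P n)) H) as [m [[Pm Hm] _]]. eauto.
Qed.

Lemma key {G} (mul : G -> G -> G) inv one (dG : G -> G -> R) :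
  is_group mul inv one -> is_metric dG -> bi_invariant mul dG ->
  forall (W : nat -> G -> Prop),
    (forall n g, W n g -> W (S n) g) -> (forall g, exists n, W n g) ->
    forall eps, 0 < eps ->
    exists l : G -> nat,
      l one = 0%nat /\ (forall g, l (inv g) = l g) /\
      (forall g h, (l (mul g h) <= l g + l h)%nat) /\
      (forall g, dG g one < eps -> (l g <= 1)%nat) /\
      ((exists N, forall g, (l g <= N)%nat) ->
        exists n k : nat, forall g, set_pow mul one (eps_nbhd dG (W n) eps) k g).
Proof.
  intros Hg Hm Hbi W Hinc Hex eps Heps.
  pose proof Hg as (A & L & Rr & IL & IR).
  assert (Wmono : forall n m g, (n <= m)%nat -> W n g -> W m g).
  { intros n m g Hnm. induction Hnm; auto. }
  set (V := fun n g => W n g /\ W n (inv g)).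
  destruct (Hex one) as [m0 Hm0].
  set (U := fun c g => exists v, V (c + m0)%nat v /\ dG g v < eps).
  set (P := fun c g => set_pow mul one (U c) c g).
  assert (Uone : forall c, U c one).
  { intros c. exists one. split.
    - split; apply (Wmono m0); try lia; auto. rewrite (grp_inv_one _ _ _ Hg). auto.
    - destruct Hm as ((H0 & _) & _). rewrite H0. lra. }
  assert (Umono : forall a b g, (a <= b)%nat -> U a g -> U b g).
  { intros a b g Hab [v [[H1 H2] H3]]. exists v. split; auto.
    split; apply (Wmono (a + m0)%nat); auto; lia. }
  assert (Uinv : forall c g, U c g -> U c (inv g)).
  { intros c g [v [[H1 H2] H3]]. exists (inv v). split.
    - split; auto. now rewrite (grp_inv_inv _ _ _ Hg).
    - destruct (Hbi v (inv g) (inv v)) as [E1 _].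
      destruct (Hbi g (mul v (inv g)) (mul v (inv v))) as [_ E2].
      rewrite <- E1, <- E2, <- A, IL, Rr, IR, L.
      destruct Hm as ((_ & Hs & _) & _). rewrite Hs. auto. }
  assert (Pex : forall g, exists c, P c g).
  { intros g. destruct (Hex g) as [n Hn]. destruct (Hex (inv g)) as [n' Hn'].
    exists (S (n + n')). exists (g :: repeat one (n + n')). split; [simpl; now rewrite repeat_length|].
    split.
    - constructor.
      + exists g. split.
        * split; [apply (Wmono n) | apply (Wmono n')]; auto; lia.
        * destruct Hm as ((H0 & _) & _). rewrite H0. lra.
      + apply Forall_forall. intros x Hx. apply repeat_spec in Hx. subst. auto.
    - simpl. now rewrite (lp_repeat _ _ _ Hg), Rr. }
  assert (lex : forall g, {c | P c g /\ forall k, P k g -> (c <= k)%nat}).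
  { intros g. apply constructive_indefinite_description. now apply min_exists. }
  exists (fun g => proj1_sig (lex g)).
  assert (Hl : forall g c, P c g -> (proj1_sig (lex g) <= c)%nat).
  { intros g c Hc. apply (proj2 (proj2_sig (lex g))). auto. }
  assert (Hl2 : forall g, P (proj1_sig (lex g)) g).
  { intros g. apply (proj1 (proj2_sig (lex g))). }
  assert (Pinv : forall c g, P c g -> P c (inv g)).
  { intros c g [l [Hlen [Hf Hp]]]. exists (rev (map inv l)). split; [|split].
    - now rewrite length_rev, length_map.
    - apply Forall_rev. apply Forall_map. eapply Forall_impl; [|exact Hf]. auto.
    - rewrite (lp_inv _ _ _ Hg). congruence. }
  assert (Pmono : forall a b g, (a <= b)%nat -> P a g -> P b g).
  { intros a b g Hab [l [Hlen [Hf Hp]]]. exists (l ++ repeat one (b - a)). split; [|split].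
    - rewrite length_app, repeat_length. lia.
    - apply Forall_app. split.
      + eapply Forall_impl; [|exact Hf]. intros; eapply Umono; eauto.
      + apply Forall_forall. intros x Hx. apply repeat_spec in Hx. subst. auto.
    - rewrite (lp_app _ _ _ Hg), (lp_repeat _ _ _ Hg), Rr. auto. }
  assert (Pmul : forall a b g h, P a g -> P b h -> P (a + b)%nat (mul g h)).
  { intros a b g h [l [Hlen [Hf Hp]]] [l' [Hlen' [Hf' Hp']]].
    exists (l ++ l'). split; [|split].
    - rewrite length_app. lia.
    - apply Forall_app. split.
      + eapply Forall_impl; [|exact Hf]. intros; eapply Umono; [|eauto]. lia.
      + eapply Forall_impl; [|exact Hf']. intros; eapply Umono; [|eauto]. lia.
    - rewrite (lp_app _ _ _ Hg). congruence. }
  split; [|split; [|split; [|split]]].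
  - assert (P 0%nat one) by (exists nil; simpl; auto).
    specialize (Hl _ _ H). lia.
  - intros g. apply Nat.le_antisymm.
    + apply Hl. apply Pinv. apply Hl2.
    + apply Hl. pose proof (Pinv _ _ (Hl2 (inv g))) as HH.
      rewrite (grp_inv_inv _ _ _ Hg) in HH. exact HH.
  - intros g h. apply Hl. apply Pmul; auto.
  - intros g Hgb. apply Hl. exists (g :: nil). split; [reflexivity|split].
    + constructor; auto. exists one. split.
      * split; apply (Wmono m0); try lia; auto. rewrite (grp_inv_one _ _ _ Hg). auto.
      * auto.
    + simpl. auto.
  - intros [N HN]. exists (N + m0)%nat, N. intros g.
    destruct (Pmono _ N g (HN g) (Hl2 g)) as [l [Hlen [Hf Hp]]].
    exists l. split; auto. split; auto.
    eapply Forall_impl; [|exact Hf]. intros x [v [[H1 _] H3]]. exists v. auto.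
Qed.


Lemma ldist_pm {G} (mul : G -> G -> G) inv one (l : G -> nat) :
  is_group mul inv one -> l one = 0%nat -> (forall g, l (inv g) = l g) ->
  (forall g h, (l (mul g h) <= l g + l h)%nat) ->
  is_pseudometric (fun x y => INR (l (mul (inv x) y))) /\
  left_invariant mul (fun x y => INR (l (mul (inv x) y))).
Proof.
  intros Hg H0 Hi Ht. pose proof Hg as (A & L & Rr & IL & IR).
  split; [split; [|split]|].
  - intros x. now rewrite IL, H0.
  - intros x y. rewrite <- Hi, (grp_inv_mul _ _ _ Hg), (grp_inv_inv _ _ _ Hg). reflexivity.
  - intros x y z. rewrite <- plus_INR. apply le_INR.
    replace (mul (inv x) z) with (mul (mul (inv x) y) (mul (inv y) z)); auto.
    rewrite <- A, (A y), IR, L. reflexivity.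
  - intros g x y. rewrite (grp_inv_mul _ _ _ Hg), <- A, (A (inv g)), IL, L. reflexivity.
Qed.

Lemma nat_bound {G} (l : G -> nat) (M : R) :
  (forall g, INR (l g) <= M) -> exists N, forall g, (l g <= N)%nat.
Proof.
  intros H. destruct (INR_unbounded M) as [N HN]. exists N. intros g.
  apply Nat.lt_le_incl. apply INR_lt. specialize (H g). lra.
Qed.

Lemma B_ii {G} (mul : G -> G -> G) inv one (dG : G -> G -> R) :
  is_group mul inv one -> is_metric dG -> bi_invariant mul dG ->
  metric_Bergman mul one dG ->
  (forall d : G -> G -> R, is_pseudometric d -> left_invariant mul d ->
      (exists eps : R, 0 < eps /\ bounded_set d (fun g => dG g one < eps)) ->
      bounded_set d (fun _ => True)).
Proof.
  intros Hg Hm Hbi HB d Hpm Hli [eps [Heps [M HM]]].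
  pose proof Hg as (A & L & Rr & IL & IR).
  pose proof Hpm as (D0 & Ds & Dt).
  destruct (HB (fun n g => d g one <= INR n)) with (eps := eps) as [n [k Hk]]; auto.
  - intros n g H. rewrite S_INR. lra.
  - intros g. destruct (INR_unbounded (d g one)) as [n Hn]. exists n. lra.
  - assert (Ha : forall a, eps_nbhd dG (fun g => d g one <= INR n) eps a ->
                  d a one <= M + INR n).
    { intros a [w [Hw Hd]].
      assert (d a w <= M).
      { rewrite <- (Hli (inv w) a w), IL. apply HM.
        - destruct (Hbi (inv w) a w) as [E _]. rewrite <- (IL w). rewrite E. auto.
        - destruct Hm as ((H0 & _) & _). rewrite H0. auto. }
      specialize (Dt a w one). lra. }
    assert (Hp : forall l, Forall (eps_nbhd dG (fun g => d g one <= INR n) eps) l ->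
                 d (lprod mul one l) one <= INR (length l) * (M + INR n)).
    { induction l as [|a l IH]; intros Hf; simpl Pilot.Defs.list_prod; simpl length.
      - rewrite D0. simpl. lra.
      - inversion Hf; subst. specialize (IH H2). specialize (Ha a H1).
        pose proof (Dt (mul a (lprod mul one l)) a one).
        assert (E : d (mul a (lprod mul one l)) a = d (lprod mul one l) one).
        { transitivity (d (mul a (lprod mul one l)) (mul a one)); [now rewrite Rr | apply Hli]. }
        rewrite E in H. rewrite S_INR. nra. }
    exists (2 * (INR k * (M + INR n))). intros x y _ _.
    destruct (Hk x) as [lx [Hlx [Hfx Hpx]]]. destruct (Hk y) as [ly [Hly [Hfy Hpy]]].
    pose proof (Hp lx Hfx). pose proof (Hp ly Hfy). subst.
    pose proof (Dt (lprod mul one lx) one (lprod mul one ly)).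
    rewrite (Ds one) in H1. rewrite Hly in H0. lra.
Qed.

Lemma ii_B {G} (mul : G -> G -> G) inv one (dG : G -> G -> R) :
  is_group mul inv one -> is_metric dG -> bi_invariant mul dG ->
  (forall d : G -> G -> R, is_pseudometric d -> left_invariant mul d ->
      (exists eps : R, 0 < eps /\ bounded_set d (fun g => dG g one < eps)) ->
      bounded_set d (fun _ => True)) ->
  metric_Bergman mul one dG.
Proof.
  intros Hg Hm Hbi H W Hinc Hex eps Heps.
  destruct (key mul inv one dG Hg Hm Hbi W Hinc Hex eps Heps)
    as [l [H0 [Hi [Ht [Hb Hf]]]]].
  apply Hf. destruct (ldist_pm mul inv one l Hg H0 Hi Ht) as [Hpm Hli].
  destruct (H _ Hpm Hli) as [M HM].
  - exists eps. split; auto. exists 2. intros x y Hx Hy.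
    specialize (Ht (inv x) y). rewrite Hi in Ht.
    apply Rle_trans with (INR (l x + l y)); [apply le_INR; auto|].
    rewrite plus_INR. pose proof (le_INR _ _ (Hb x Hx)). pose proof (le_INR _ _ (Hb y Hy)).
    simpl in *. lra.
  - apply (nat_bound l M). intros g. specialize (HM one g I I). simpl in HM.
    rewrite (grp_inv_one _ _ _ Hg) in HM. destruct Hg as (_ & L & _). now rewrite L in HM.
Qed.

Lemma ii_iii {G} (mul : G -> G -> G) (one : G) (dG : G -> G -> R) :
  (forall d : G -> G -> R, is_pseudometric d -> left_invariant mul d ->
      (exists eps : R, 0 < eps /\ bounded_set d (fun g => dG g one < eps)) ->
      bounded_set d (fun _ => True)) ->
   (forall (X : Type) (dX : X -> X -> R) (act : G -> X -> X),
      is_metric dX -> isometric_action mul one act dX ->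
      (forall x : X, exists eps : R, 0 < eps /\
         forall g, dG g one < eps -> dX x (act g x) <= 1 / eps) ->
      forall x : X, bounded_set dX (fun y => exists g, y = act g x)).
Proof.
  intros H X dX act [(D0 & Ds & Dt) _] (A1 & A2 & A3) Hx x.
  destruct (H (fun g h => dX (act g x) (act h x))) as [M HM].
  - split; [|split]; intros; auto.
  - intros g a b. simpl. rewrite !A2. apply A3.
  - destruct (Hx x) as [eps [Heps He]]. exists eps. split; auto.
    exists (2 * (1 / eps)). intros a b Ha Hb.
    pose proof (He a Ha). pose proof (He b Hb). pose proof (Dt (act a x) x (act b x)).
    rewrite (Ds (act a x) x) in H2. lra.
  - exists M. intros y y' [g Hy] [h Hy']. subst. apply HM; auto.
Qed.

Lemma iii_B {G} (mul : G -> G -> G) inv one (dG : G -> G -> R) :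
  is_group mul inv one -> is_metric dG -> bi_invariant mul dG ->
   (forall (X : Type) (dX : X -> X -> R) (act : G -> X -> X),
      is_metric dX -> isometric_action mul one act dX ->
      (forall x : X, exists eps : R, 0 < eps /\
         forall g, dG g one < eps -> dX x (act g x) <= 1 / eps) ->
      forall x : X, bounded_set dX (fun y => exists g, y = act g x)) ->
  metric_Bergman mul one dG.
Proof.
  intros Hg Hm Hbi H W Hinc Hex eps Heps.
  destruct (key mul inv one dG Hg Hm Hbi W Hinc Hex eps Heps)
    as [l [H0 [Hi [Ht [Hb Hf]]]]].
  apply Hf. destruct (ldist_pm mul inv one l Hg H0 Hi Ht) as [(P0 & Ps & Pt) Hli].
  pose proof Hg as (A & L & Rr & IL & IR).
  pose proof Hm as ((M0 & Ms & Mt) & Meq).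
  pose proof (pm_nonneg _ (proj1 Hm)) as Mnn.
  assert (Lnn : forall x y, 0 <= INR (l (mul (inv x) y))) by (intros; apply pos_INR).
  destruct (H G (fun x y => INR (l (mul (inv x) y)) + dG x y) mul) with (x := one)
    as [M HM].
  - split; [split; [|split]|].
    + intros x. rewrite P0, M0. lra.
    + intros x y. rewrite Ps, Ms. reflexivity.
    + intros x y z. pose proof (Pt x y z). pose proof (Mt x y z). lra.
    + intros x y Hxy. apply Meq. pose proof (Lnn x y). pose proof (Mnn x y). lra.
  - split; [|split]; auto.
    intros g x y. rewrite (Hli g x y). f_equal. apply Hbi.
  - intros x. set (e := Rmin eps (/ 2)).
    assert (He : 0 < e) by (apply Rmin_glb_lt; lra).
    assert (He2 : e <= / 2) by apply Rmin_r.
    assert (Hie : 2 <= 1 / e).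
    { unfold Rdiv. rewrite Rmult_1_l. rewrite <- (Rinv_inv 2).
      apply Rinv_le_contravar; lra. }
    exists e. split; auto. intros g Hge.
    assert (Hge' : dG g one < eps) by (apply Rlt_le_trans with e; auto; apply Rmin_l).
    assert (E : dG x (mul g x) = dG g one).
    { destruct (Hbi x one g) as [_ E]. rewrite L in E. rewrite E. apply Ms. }
    assert (Hl1 : (l (mul (inv x) (mul g x)) <= 1)%nat).
    { apply Hb. destruct (Hbi (inv x) (mul g x) x) as [E1 _]. rewrite <- (IL x).
      rewrite E1. destruct (Hbi x g one) as [_ E2]. rewrite L in E2. rewrite E2. auto. }
    apply le_INR in Hl1. simpl in Hl1. rewrite E. lra.
  - apply (nat_bound l M). intros g. specialize (HM one (mul g one)).
    rewrite Rr in HM. assert (HH := HM (ex_intro _ one (eq_sym (L one))) (ex_intro _ g (eq_sym (Rr g)))).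
    rewrite (grp_inv_one _ _ _ Hg), L in HH. pose proof (Mnn one g). lra.
Qed.

Theorem proposition4p11 (G : Type) (mul : G -> G -> G) (inv : G -> G) (one : G)
  (dG : G -> G -> R) :
  is_group mul inv one -> is_metric dG -> bi_invariant mul dG ->
  (metric_Bergman mul one dG <->
   (forall d : G -> G -> R, is_pseudometric d -> left_invariant mul d ->
      (exists eps : R, 0 < eps /\ bounded_set d (fun g => dG g one < eps)) ->
      bounded_set d (fun _ => True))) /\
  (metric_Bergman mul one dG <->
   (forall (X : Type) (dX : X -> X -> R) (act : G -> X -> X),
      is_metric dX -> isometric_action mul one act dX ->
      (forall x : X, exists eps : R, 0 < eps /\
         forall g, dG g one < eps -> dX x (act g x) <= 1 / eps) ->
      forall x : X, bounded_set dX (fun y => exists g, y = act g x))).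
Proof.
  intros Hg Hm Hbi. split; split.
  - apply (B_ii mul inv); auto.
  - apply (ii_B mul inv); auto.
  - intros HB. apply ii_iii. apply (B_ii mul inv); auto.
  - apply (iii_B mul inv); auto.
Qed.
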